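(* Let $n\ge 2$ and let $X_{a_1\cdots a_n}=X_{(a_1\cdots a_n)}$ be an affine tensor field on Minkowski spacetime $(\mathbb R^4,\eta)$, written in standard rectangular coordinates. Then $$\partial_r\partial_sX_{a_1\cdots a_n}=\frac{n(n-1)}{2}\partial_{(a_1}\partial_{a_2}X_{a_3\cdots a_n)rs},$$ with symmetrization over $a_1,\dots,a_n$ only.
   Context: Parentheses around indices denote symmetrization with weight one. A totally symmetric tensor field $X_{a_1\cdots a_n}$ on a pseudo-Riemannian manifold with Levi-Civita connection $\nabla$ is an affine tensor if $\nabla_b\nabla_{(c}X_{a_1\cdots a_n)}=0$; in rectangular coordinates on Minkowski spacetime $\nabla=\partial$. *)

(* Defs.v *)
From Stdlib Require Import Reals ClassicalEpsilon.
From mathcomp Require Import all_boot all_fingroup.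
Set Implicit Arguments. Unset Strict Implicit. Unset Printing Implicit Defensive.
Local Open Scope R_scope.

Definition pt := 'I_4 -> R.

Definition upd (p : pt) (i : 'I_4) (t : R) : pt :=
  fun j => if j == i then t else p j.

(* Partial derivative  d_i f  at p (chosen by epsilon; meaningful when it exists). *)
Definition pd (i : 'I_4) (f : pt -> R) : pt -> R :=
  fun p => epsilon (inhabits 0)
    (fun l => derivable_pt_lim (fun t => f (upd p i t)) (p i) l).

Fixpoint pds (l : seq 'I_4) (f : pt -> R) : pt -> R :=
  match l with
  | [::] => f
  | i :: l' => pd i (pds l' f)
  end.

Definition cont4 (f : pt -> R) : Prop :=
  forall p eps, 0 < eps -> exists delta, 0 < delta /\
    forall q, (forall j, Rabs (q j - p j) < delta) -> Rabs (f q - f p) < eps.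

Definition smooth (f : pt -> R) : Prop :=
  forall l : seq 'I_4, cont4 (pds l f) /\
    forall (i : 'I_4) (p : pt),
      derivable_pt_lim (fun t => pds l f (upd p i t)) (p i) (pd i (pds l f) p).

(* A rank-n covariant tensor field: components X a, a : 'I_n -> 'I_4. *)
Definition tfield (n : nat) := ('I_n -> 'I_4) -> pt -> R.

Definition sum_perm (m : nat) (F : 'S_m -> R) : R := \big[Rplus/0]_(s : 'S_m) F s.

Definition totally_symmetric (n : nat) (X : tfield n) : Prop :=
  forall (a : 'I_n -> 'I_4) (s : 'S_n), X (fun i => a (s i)) = X a.

(* Affine: d_b d_{(c} X_{a_1 ... a_n)} = 0, where e = (c, a_1, ..., a_n)
   and the symmetrization has weight one (factor 1/(n+1)!). *)
Definition affine (n : nat) (X : tfield n) : Prop :=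
  forall (b : 'I_4) (e : 'I_n.+1 -> 'I_4) (p : pt),
    / INR (n.+1)`! *
      sum_perm (fun s : 'S_n.+1 =>
        pd b (pd (e (s ord0)) (X (fun i : 'I_n => e (s (lift ord0 i))))) p) = 0.

(* k-th entry (0-based, as a nat) of an index list a : 'I_n -> 'I_4 (default 0). *)
Definition getidx (n : nat) (a : 'I_n -> 'I_4) (k : nat) : 'I_4 :=
  oapp a (ord0 : 'I_4) (insub k).

(* Index list (a_{s(2)}, ..., a_{s(n-1)}, r, t) of length n. *)
Definition tailidx (n : nat) (a : 'I_n -> 'I_4) (s : 'S_n) (r t : 'I_4) : 'I_n -> 'I_4 :=
  fun k => if (val k < n - 2)%N then getidx (fun i => a (s i)) (val k + 2)
           else if (val k == n - 2)%N then r else t.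

(* Main.v *)
Require Import Defs.
From HB Require Import structures.
From Stdlib Require Import Reals Lra FunctionalExtensionality.
From mathcomp Require Import all_boot all_fingroup.
Local Open Scope R_scope.

Lemma mvt_gen (f f' : R -> R) (x h : R) : h <> 0 ->
  (forall c, derivable_pt_lim f c (f' c)) ->
  exists c, f (x + h) - f x = f' c * h /\ Rabs (c - x) < Rabs h.
Proof.
move=> hn Hd.
destruct (Rlt_or_le 0 h) as [hp|hneg].
- have [c [E Hc]] := MVT_cor2 f f' x (x+h) ltac:(lra) (fun c _ => Hd c).
  exists c; split; first by rewrite E; ring_simplify.
  rewrite !Rabs_right; lra.
- have hlt : h < 0 by lra.
  have [c [E Hc]] := MVT_cor2 f f' (x+h) x ltac:(lra) (fun c _ => Hd c).
  exists c; split.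
  + have -> : f (x + h) - f x = - (f x - f (x + h)) by ring.
    rewrite E; ring.
  + rewrite Rabs_left; last lra. rewrite Rabs_left; lra.
Qed.

Section Cl.
Variables (p : pt) (b c : 'I_4).
Hypothesis bc : b != c.
Definition q (x y : R) : pt := upd (upd p b x) c y.

Lemma q_b x y : q x y b = x.
Proof. by rewrite /q /upd (negbTE bc) eqxx. Qed.
Lemma q_c x y : q x y c = y.
Proof. by rewrite /q /upd eqxx. Qed.
Lemma upd_qb x y t : upd (q x y) b t = q t y.
Proof.
apply: functional_extensionality => j; rewrite /q /upd.
case: (eqVneq j c) => [->|_]; first by rewrite eq_sym (negbTE bc).
by case: (j == b).
Qed.
Lemma upd_qc x y t : upd (q x y) c t = q x t.
Proof.
apply: functional_extensionality => j; rewrite /q /upd.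
by case: (j == c).
Qed.
Lemma q_p : q (p b) (p c) = p.
Proof.
apply: functional_extensionality => j; rewrite /q /upd.
case: (eqVneq j c) => [->|_] //. by case: (eqVneq j b) => [->|].
Qed.
Lemma q_pc x : q x (p c) = upd p b x.
Proof.
apply: functional_extensionality => j; rewrite /q /upd.
case: (eqVneq j c) => [->|] //. by rewrite eq_sym (negbTE bc).
Qed.
Lemma q_close x y d : Rabs (x - p b) < d -> Rabs (y - p c) < d ->
  forall j, Rabs (q x y j - p j) < d.
Proof.
move=> hx hy j. rewrite /q /upd.
case: (eqVneq j c) => [->//|_]. case: (eqVneq j b) => [->//|_].
rewrite Rminus_diag Rabs_R0. apply: Rle_lt_trans hx. apply Rabs_pos.
Qed.
End Cl.

Lemma clairaut (f : pt -> R) (Hs : smooth f) (b c : 'I_4) (p : pt) :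
  pd b (pd c f) p = pd c (pd b f) p.
Proof.
case: (eqVneq b c) => [->//|bc].
have D1 : derivable_pt_lim (fun x => pd c f (upd p b x)) (p b) (pd b (pd c f) p).
  exact: (proj2 (Hs [:: c]) b p).
apply: (uniqueness_limite _ _ _ _ D1).
set L := pd c (pd b f) p.
move=> eps Heps.
have [Hcont _] := Hs [:: c; b].
have [d [Hd Hcd]] := Hcont p (eps/2) ltac:(lra).
exists (mkposreal d Hd) => h hn0 hlt /=. simpl in hlt.
rewrite ?Rplus_0_r in hlt *.
set x0 := p b; set y0 := p c.
have Df : forall x y, derivable_pt_lim (fun t => f (q p b c t y)) x (pd b f (q p b c x y)).
  move=> x y. have := proj2 (Hs [::]) b (q p b c x y). simpl.
  rewrite q_b //. have -> : (fun t => f (upd (q p b c x y) b t)) = (fun t => f (q p b c t y)).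
    by apply: functional_extensionality => t; rewrite upd_qb.
  done.
have Dfb : forall x y, derivable_pt_lim (fun t => pd b f (q p b c x t)) y (pd c (pd b f) (q p b c x y)).
  move=> x y. have := proj2 (Hs [:: b]) c (q p b c x y). simpl.
  rewrite q_c //. have -> : (fun t => pd b f (upd (q p b c x y) c t)) = (fun t => pd b f (q p b c x t)).
    by apply: functional_extensionality => t; rewrite upd_qc.
  done.
have Dfc : forall x, derivable_pt_lim (fun t => f (q p b c x t)) y0 (pd c f (upd p b x)).
  move=> x. have := proj2 (Hs [::]) c (upd p b x). simpl.
  have -> : upd p b x c = y0 by rewrite /upd eq_sym (negbTE bc).
  have -> : (fun t => f (upd (upd p b x) c t)) = (fun t => f (q p b c x t)) by [].
  done.
set Delta := fun k => f (q p b c (x0 + h) (y0 + k)) - f (q p b c (x0+h) y0)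
                      - (f (q p b c x0 (y0 + k)) - f (q p b c x0 y0)).
have Hk : forall k, k <> 0 -> Rabs k < d -> Rabs (Delta k / (h * k) - L) < eps / 2.
  move=> k kn0 klt.
  have [xi [E1 Hxi]] := mvt_gen (fun x => f (q p b c x (y0 + k)) - f (q p b c x y0))
     (fun x => pd b f (q p b c x (y0 + k)) - pd b f (q p b c x y0)) x0 h hn0
     (fun x => derivable_pt_lim_minus _ _ _ _ _ (Df x (y0 + k)) (Df x y0)).
  have [eta [E2 Heta]] := mvt_gen (fun y => pd b f (q p b c xi y))
     (fun y => pd c (pd b f) (q p b c xi y)) y0 k kn0 (fun y => Dfb xi y).
  have -> : Delta k = h * k * pd c (pd b f) (q p b c xi eta).
    rewrite /Delta E1 E2. ring.
  have -> : h * k * pd c (pd b f) (q p b c xi eta) / (h * k) = pd c (pd b f) (q p b c xi eta).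
    field; split; auto.
  have := Hcd (q p b c xi eta) (@q_close p b c _ _ _ (Rlt_trans _ _ _ Hxi hlt) (Rlt_trans _ _ _ Heta klt)).
  done.
set Dh := pd c f (upd p b (x0 + h)) - pd c f p.
have HD : derivable_pt_lim Delta 0 Dh.
  have H := derivable_pt_lim_minus _ _ _ _ _ (Dfc (x0 + h)) (Dfc x0).
  have -> : Dh = pd c f (upd p b (x0 + h)) - pd c f (upd p b x0).
    rewrite /Dh /x0. congr (_ - pd c f _).
    apply: functional_extensionality => j; rewrite /upd. by case: eqVneq => [->|].
  move=> e He. have [dd Hdd] := H e He. exists dd => k k0 kd.
  have := Hdd k k0 kd. rewrite /Delta /= Rplus_0_r Rplus_0_l.
  move=> HH. apply: Rle_lt_trans HH. right. congr Rabs. congr Rminus. rewrite /minus_fct /=. rewrite /Rdiv; ring.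
have -> : upd p b x0 = p.
  apply: functional_extensionality => j; rewrite /upd /x0. by case: eqVneq => [->|].
have hpos : 0 < Rabs h by apply: Rabs_pos_lt.
have hp2 : 0 < eps/2 * Rabs h by apply: Rmult_lt_0_compat; lra.
have [dd Hdd] := HD (eps/2 * Rabs h) hp2.
have ddp := cond_pos dd.
set k := Rmin dd d / 2.
have kp : 0 < k by rewrite /k; have := Rmin_pos dd d ddp Hd; lra.
have kd1 : Rabs k < dd by rewrite Rabs_right; [rewrite /k; have := Rmin_l dd d|]; lra.
have kd2 : Rabs k < d by rewrite Rabs_right; [rewrite /k; have := Rmin_r dd d|]; lra.
have H1 := Hdd k ltac:(lra) kd1.
have H2 := Hk k ltac:(lra) kd2.
have D0 : Delta 0 = 0 by rewrite /Delta Rplus_0_r; ring.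
rewrite Rplus_0_l D0 Rminus_0_r in H1.
have E : (Dh / h - L) = (Dh - Delta k / k) / h + (Delta k / (h * k) - L).
  field; lra.
rewrite -/Dh E.
apply: Rle_lt_trans (Rabs_triang _ _) _.
have : Rabs ((Dh - Delta k / k) / h) < eps / 2.
  rewrite /Rdiv Rabs_mult Rabs_inv.
  apply: (Rmult_lt_reg_r (Rabs h)) => //. rewrite Rmult_assoc Rinv_l; last lra.
  rewrite Rmult_1_r Rabs_minus_sym. done.
lra.
Qed.
Lemma Rplus_assoc' : associative Rplus. Proof. by move=> x y z; rewrite Rplus_assoc. Qed.
HB.instance Definition _ := Monoid.isComLaw.Build R 0 Rplus Rplus_assoc' Rplus_comm Rplus_0_l.

Lemma bigR_scale (I : Type) (r : seq I) (P : pred I) (F : I -> R) c :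
  c * \big[Rplus/0]_(i <- r | P i) F i = \big[Rplus/0]_(i <- r | P i) (c * F i).
Proof.
elim: r => [|x r IH]; first by rewrite !big_nil; ring.
rewrite !big_cons; case: (P x); last done.
by rewrite Rmult_plus_distr_l IH.
Qed.

Lemma bigR_const (T : finType) (c : R) :
  \big[Rplus/0]_(i : T) c = INR #|T| * c.
Proof.
rewrite big_const. elim: #|T| => [|k IH]; first by rewrite /=; ring.
rewrite iterS IH S_INR; ring.
Qed.

Lemma bigR_split (I : Type) (r : seq I) (P : pred I) (F G : I -> R) :
  \big[Rplus/0]_(i <- r | P i) (F i + G i) =
  \big[Rplus/0]_(i <- r | P i) F i + \big[Rplus/0]_(i <- r | P i) G i.
Proof. by rewrite big_split. Qed.

Lemma bigR_opp (I : Type) (r : seq I) (P : pred I) (F : I -> R) :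
  \big[Rplus/0]_(i <- r | P i) (- F i) = - \big[Rplus/0]_(i <- r | P i) F i.
Proof.
have := bigR_scale _ r P F (-1). rewrite Ropp_mult_distr_l_reverse Rmult_1_l => ->.
by apply: eq_bigr => i _; ring.
Qed.

Definition mk (n : nat) (l : seq 'I_4) : 'I_n -> 'I_4 := fun i => nth ord0 l i.

Lemma mk_map n (f : 'I_n -> 'I_4) : mk n (map f (enum 'I_n)) = f.
Proof.
apply: functional_extensionality => i; rewrite /mk (nth_map i) ?size_enum_ord //.
by rewrite nth_ord_enum.
Qed.

Lemma map_mk n l : size l = n -> map (mk n l) (enum 'I_n) = l.
Proof.
move=> hs; apply: (@eq_from_nth _ ord0); first by rewrite size_map size_enum_ord.
move=> k; rewrite size_map size_enum_ord => hk.
rewrite (nth_map (Ordinal hk)) ?size_enum_ord // /mk.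
by rewrite (nth_ord_enum (Ordinal hk) (Ordinal hk)).
Qed.

Lemma perm_rem_cons (T : eqType) (x : T) (A B : seq T) :
  perm_eq A (x :: B) -> perm_eq (rem x A) B.
Proof.
move=> h. have xA : x \in A by rewrite (perm_mem h) mem_head.
have h2 : perm_eq (x :: rem x A) (x :: B) by apply: perm_trans h; rewrite perm_sym; exact: perm_to_rem.
by rewrite perm_cons in h2.
Qed.

Lemma perm_map_perm n (s : {perm 'I_n}) (e : 'I_n -> 'I_4) :
  perm_eq (map (e \o s) (enum 'I_n)) (map e (enum 'I_n)).
Proof.
rewrite map_comp; apply: perm_map.
apply: uniq_perm; first by rewrite map_inj_uniq ?enum_uniq //; exact: perm_inj.
  exact: enum_uniq.
move=> x; rewrite mem_enum; apply/mapP; exists (s^-1 x)%g; first by rewrite mem_enum.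
by rewrite permKV.
Qed.

Section Sym.
Variables (n : nat) (X : tfield n) (Xsym : totally_symmetric X).

Lemma X_perm l l' : size l = n -> perm_eq l l' -> X (mk n l) = X (mk n l').
Proof.
move=> hs hp. have hs' : size l' == n by rewrite -(perm_size hp) hs.
pose t := Tuple hs'.
have /tuple_permP [s Es] : perm_eq l t by [].
have -> : mk n l = fun i => mk n l' (s i).
  apply: functional_extensionality => i. rewrite /mk Es.
  rewrite (nth_map i) ?size_enum_ord // nth_ord_enum.
  by rewrite (tnth_nth ord0).
by rewrite Xsym.
Qed.
End Sym.

Lemma INR_fact_neq0 k : INR k`! <> 0.
Proof. apply: not_0_INR => H; have := fact_gt0 k; by rewrite H. Qed.

Lemma sum_enum_map (T : finType) (e : T -> 'I_4) (G : 'I_4 -> R) :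
  \big[Rplus/0]_(x <- map e (enum T)) G x = \big[Rplus/0]_(k : T) G (e k).
Proof. by rewrite big_map big_enum. Qed.

Section Key.
Variables (n : nat) (X : tfield n) (Xsym : totally_symmetric X) (Xaff : affine X) (p : pt).

Lemma key (E : seq 'I_4) b : size E = n.+1 ->
  \big[Rplus/0]_(x <- E) pd b (pd x (X (mk n (rem x E)))) p = 0.
Proof.
move=> hE.
set e := mk n.+1 E.
set G := fun x => pd b (pd x (X (mk n (rem x E)))) p.
have H := Xaff b e p.
have H0 : \big[Rplus/0]_(s : {perm 'I_n.+1}) G (e (s ord0)) = 0.
  have /Rmult_integral [H1|H1] := H; first by have := Rinv_neq_0_compat _ (INR_fact_neq0 n.+1).
  rewrite /sum_perm in H1; rewrite -[RHS]H1; apply: eq_bigr => s _.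
  rewrite /G; congr (pd b (pd _ _) p).
  rewrite -(mk_map n (fun i => e (s (lift ord0 i)))).
  apply: X_perm => //.
    rewrite size_rem; first by rewrite hE. rewrite /e /mk; apply: mem_nth; by rewrite hE.
  apply: perm_rem_cons.
  have -> : e (s ord0) :: map (fun i => e (s (lift ord0 i))) (enum 'I_n) =
            map (e \o s) (enum 'I_n.+1) by rewrite enum_ordSl /= -map_comp.
  rewrite -{1}(map_mk _ _ hE) perm_sym. exact: perm_map_perm.
have Hk : forall k : 'I_n.+1, \big[Rplus/0]_(s : {perm 'I_n.+1}) G (e (s k)) = 0.
  move=> k; rewrite -[RHS]H0 [RHS](reindex_inj (mulgI (tperm ord0 k))).
  by apply: eq_bigr => s _; rewrite permM tpermL.
have Hs : \big[Rplus/0]_(s : {perm 'I_n.+1}) \big[Rplus/0]_(k : 'I_n.+1) G (e k) = 0.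
  have Hs0 : \big[Rplus/0]_(k : 'I_n.+1) \big[Rplus/0]_(s : {perm 'I_n.+1}) G (e (s k)) = 0.
    by rewrite big1 // => k _; exact: Hk k.
  rewrite exchange_big in Hs0. rewrite -[RHS]Hs0.
  apply: eq_bigr => s _.
  exact: (reindex_inj (F := fun k => G (e k)) (@perm_inj _ s)).
rewrite bigR_const card_Sn in Hs.
have /Rmult_integral [H1|H1] := Hs; first by have := INR_fact_neq0 n.+1.
change (\big[Rplus/0]_(x <- E) G x = 0). rewrite -{1}(map_mk _ _ hE) sum_enum_map. exact: H1.
Qed.
End Key.

Lemma perm_swap (T : eqType) (a b : T) s : perm_eq (a :: b :: s) (b :: a :: s).
Proof. by have := perm_catCA [:: a] [:: b] s (b :: a :: s); rewrite /= perm_refl. Qed.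

Lemma rem_perm (T : eqType) (x y : T) s : x \in s -> perm_eq (rem x (y :: s)) (y :: rem x s).
Proof.
move=> xs; apply: perm_rem_cons.
apply: (@perm_trans _ (y :: x :: rem x s)); first by rewrite perm_cons perm_to_rem.
exact: perm_swap.
Qed.

Section Main.
Variables (n : nat) (X : tfield n) (Xsmooth : forall a, smooth (X a))
  (Xsym : totally_symmetric X) (Xaff : affine X) (p : pt).

Definition Zl (b c : 'I_4) (l : seq 'I_4) := pd b (pd c (X (mk n l))) p.

Lemma Zl_perm b c l l' : size l = n -> perm_eq l l' -> Zl b c l = Zl b c l'.
Proof. by move=> hs hp; rewrite /Zl (@X_perm n X Xsym l l' hs hp). Qed.

Lemma Zl_sym b c l : Zl b c l = Zl c b l.
Proof. exact: clairaut. Qed.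

Lemma key' b E : size E = n.+1 -> \big[Rplus/0]_(x <- E) Zl b x (rem x E) = 0.
Proof. exact: key. Qed.

Lemma two (A : seq 'I_4) r t : size A = n ->
  2 * Zl r t A = \big[Rplus/0]_(x <- A) \big[Rplus/0]_(y <- rem x A)
     Zl x y (r :: t :: rem y (rem x A)).
Proof.
move=> hA.
have S1 : Zl r t A = - \big[Rplus/0]_(x <- A) Zl r x (t :: rem x A).
  have K := key' r (t :: A) ltac:(by rewrite /= hA).
  rewrite big_cons in K. have ee : rem t (t :: A) = A by rewrite /= eqxx. rewrite ee in K.
  have -> : \big[Rplus/0]_(x <- A) Zl r x (t :: rem x A) =
            \big[Rplus/0]_(x <- A) Zl r x (rem x (t :: A)).
    apply: eq_big_seq => x xA; apply: Zl_perm.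
      by rewrite /= size_rem // hA prednK // -hA; case: (A) xA.
    rewrite perm_sym; exact: rem_perm.
  lra.
have S2 : Zl t r A = - \big[Rplus/0]_(x <- A) Zl t x (r :: rem x A).
  have K := key' t (r :: A) ltac:(by rewrite /= hA).
  rewrite big_cons in K. have ee : rem r (r :: A) = A by rewrite /= eqxx. rewrite ee in K.
  have -> : \big[Rplus/0]_(x <- A) Zl t x (r :: rem x A) =
            \big[Rplus/0]_(x <- A) Zl t x (rem x (r :: A)).
    apply: eq_big_seq => x xA; apply: Zl_perm.
      by rewrite /= size_rem // hA prednK // -hA; case: (A) xA.
    rewrite perm_sym; exact: rem_perm.
  lra.
have S3 : forall x, x \in A -> Zl x r (t :: rem x A) + Zl x t (r :: rem x A) =
    - \big[Rplus/0]_(y <- rem x A) Zl x y (r :: t :: rem y (rem x A)).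
  move=> x xA. set R0 := rem x A.
  have hR : size R0 = n.-1 by rewrite size_rem // hA.
  have hn : (0 < n)%N by rewrite -hA; case: (A) xA.
  have hR' : size (r :: t :: R0) = n.+1 by rewrite /= hR prednK.
  have K : Zl x r (rem r (r :: t :: R0)) + (Zl x t (rem t (r :: t :: R0)) +
     \big[Rplus/0]_(y <- R0) Zl x y (rem y (r :: t :: R0))) = 0.
    by rewrite -[RHS](key' x _ hR') !big_cons.
  have e1 : Zl x r (rem r (r :: t :: R0)) = Zl x r (t :: R0) by rewrite /= eqxx.
  have e2 : Zl x t (rem t (r :: t :: R0)) = Zl x t (r :: R0).
    apply: Zl_perm.
      by rewrite size_rem ?hR' // !inE eqxx orbT.
    have := @rem_perm _ t r (t :: R0) (mem_head t R0). by rewrite /= eqxx.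
  have e3 : \big[Rplus/0]_(y <- R0) Zl x y (rem y (r :: t :: R0)) =
            \big[Rplus/0]_(y <- R0) Zl x y (r :: t :: rem y R0).
    apply: eq_big_seq => y yR; apply: Zl_perm.
      by rewrite size_rem ?hR' // !inE yR !orbT.
    apply: (perm_trans (@rem_perm _ y r (t :: R0) _)); first by rewrite inE yR orbT.
    rewrite perm_cons. exact: rem_perm.
  rewrite e1 e2 e3 in K. lra.
have -> : 2 * Zl r t A = Zl r t A + Zl t r A by rewrite (Zl_sym t r); ring.
rewrite S1 S2 -Ropp_plus_distr -bigR_split.
rewrite -bigR_opp. apply: eq_big_seq => x xA.
by rewrite (Zl_sym r x) (Zl_sym t x) S3 // Ropp_involutive.
Qed.

Lemma Dconv (a : 'I_n -> 'I_4) (H : 'I_4 -> 'I_4 -> R) :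
  \big[Rplus/0]_(x <- map a (enum 'I_n)) \big[Rplus/0]_(y <- rem x (map a (enum 'I_n))) H x y
  = \big[Rplus/0]_(i : 'I_n) \big[Rplus/0]_(j | j != i) H (a i) (a j).
Proof.
set A := map a (enum 'I_n).
rewrite {1}/A sum_enum_map. apply: eq_bigr => i _.
have mem : a i \in A by rewrite /A; apply: map_f; rewrite mem_enum.
have E1 := perm_big (op := Rplus) (x := 0) (P := predT) (F := H (a i)) _ (perm_to_rem mem).
rewrite big_cons /= in E1.
have E2 : \big[Rplus/0]_(y <- A) H (a i) y = H (a i) (a i) + \big[Rplus/0]_(j | j != i) H (a i) (a j).
  by rewrite /A sum_enum_map (bigD1 i).
rewrite E1 in E2. exact: (Rplus_eq_reg_l _ _ _ E2).
Qed.

End Main.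

Lemma double_count m (W : 'I_m.+2 -> 'I_m.+2 -> R) :
  INR m.+2 * (INR m.+2 - 1) * \big[Rplus/0]_(s : {perm 'I_m.+2}) W (s (inord 0)) (s (inord 1))
  = INR (m.+2)`! * \big[Rplus/0]_(i : 'I_m.+2) \big[Rplus/0]_(j | j != i) W i j.
Proof.
set i0 : 'I_m.+2 := inord 0. set i1 : 'I_m.+2 := inord 1.
have i01 : i0 != i1 by rewrite /i0 /i1 -(inj_eq val_inj) /= !inordK.
set S := \big[Rplus/0]_(s : {perm 'I_m.+2}) W (s i0) (s i1).
have Hij : forall i j : 'I_m.+2, j != i ->
    \big[Rplus/0]_(s : {perm 'I_m.+2}) W (s i) (s j) = S.
  move=> i j ji.
  set u := tperm i0 i i1.
  have ui : u != i.
    rewrite /u; apply/eqP => h.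
    have : tperm i0 i (tperm i0 i i1) = tperm i0 i i by rewrite h.
    rewrite tpermK tpermR => h2. by rewrite h2 eqxx in i01.
  set pi := (tperm i0 i * tperm u j)%g.
  have p0 : pi i0 = i by rewrite /pi permM tpermL tpermD // eq_sym.
  have p1 : pi i1 = j by rewrite /pi permM -/u tpermL.
  rewrite /S [RHS](reindex_inj (mulgI pi)).
  by apply: eq_bigr => s _; rewrite !permM (tpermL i0 i) (tpermD ui ji) (tpermL (tperm i0 i i1) j).
have L1 : \big[Rplus/0]_(i : 'I_m.+2) \big[Rplus/0]_(j | j != i)
            \big[Rplus/0]_(s : {perm 'I_m.+2}) W (s i) (s j)
          = INR m.+2 * (INR m.+2 - 1) * S.
  rewrite (eq_bigr (fun _ => (INR m.+2 - 1) * S)).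
    by rewrite bigR_const card_ord; ring.
  move=> i _. rewrite (eq_bigr (fun _ => S)); last by move=> j; apply: Hij.
  have := bigR_const 'I_m.+2 S. rewrite (bigD1 i) // card_ord => h.
  have h2 : S + \big[Rplus/0]_(j | j != i) S = INR m.+2 * S := h. lra.
rewrite -L1.
rewrite (eq_bigr (fun i => \big[Rplus/0]_(s : {perm 'I_m.+2}) \big[Rplus/0]_(j | j != i) W (s i) (s j))); last first.
  by move=> i _; rewrite exchange_big.
rewrite exchange_big /=.
rewrite (eq_bigr (fun _ => \big[Rplus/0]_(i : 'I_m.+2) \big[Rplus/0]_(j | j != i) W i j)).
  by rewrite bigR_const card_Sn.
move=> s _.
rewrite [RHS](reindex_inj (@perm_inj _ s)). apply: eq_bigr => i _.
rewrite [RHS](reindex_inj (@perm_inj _ s)). apply: eq_bigl => j.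
by rewrite (inj_eq (@perm_inj _ s)).
Qed.

Lemma map_enum_iota k (B : Type) (f : 'I_k.+1 -> B) :
  map f (enum 'I_k.+1) = map (fun j => f (inord j)) (iota 0 k.+1).
Proof.
rewrite -val_enum_ord -map_comp; apply: eq_map => i /=; by rewrite inord_val.
Qed.

Lemma getidxE k (f : 'I_k.+1 -> 'I_4) j : (j < k.+1)%N -> getidx f j = f (inord j).
Proof.
move=> hj. have h := valK (sT := 'I_k.+1) (inord j).
have hv : val (inord j : 'I_k.+1) = j by rewrite /= inordK.
rewrite hv in h. by rewrite /getidx h.
Qed.

Lemma tail_perm m (a : 'I_m.+2 -> 'I_4) (s : {perm 'I_m.+2}) r t :
  perm_eq (map (tailidx a s r t) (enum 'I_m.+2))
    (r :: t :: rem (a (s (inord 1))) (rem (a (s (inord 0))) (map a (enum 'I_m.+2)))).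
Proof.
set T := map (fun k => a (s (inord (k + 2)))) (iota 0 m).
have E1 : map (tailidx a s r t) (enum 'I_m.+2) = T ++ [:: r; t].
  rewrite map_enum_iota.
  have -> : iota 0 m.+2 = iota 0 m ++ [:: m; m.+1] by rewrite -addn2 iotaD.
  rewrite map_cat /T; congr (_ ++ _).
    apply/eq_in_map => k; rewrite mem_iota add0n => /andP[_ hk].
    have hv : val (inord k : 'I_m.+2) = k by rewrite /= inordK // (ltn_trans hk) // ltnS leqW.
    have hm : (m.+2 - 2 = m)%N by rewrite -addn2 addnK.
    by rewrite /tailidx hv hm hk getidxE // addn2 !ltnS.
  have hv1 : val (inord m : 'I_m.+2) = m by rewrite /= inordK // ltnS leqW.
  have hv2 : val (inord m.+1 : 'I_m.+2) = m.+1 by rewrite /= inordK.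
  have hm2 : (m.+2 - 2 = m)%N by rewrite -addn2 addnK.
  rewrite /= /tailidx hv1 hv2 hm2 ltnn eqxx.
  by rewrite ltnNge leqnSn /= eqn_leq ltnn.
have P2 : perm_eq (map a (enum 'I_m.+2)) (a (s (inord 0)) :: a (s (inord 1)) :: T).
  have -> : a (s (inord 0)) :: a (s (inord 1)) :: T = map (a \o s) (enum 'I_m.+2).
    rewrite map_enum_iota /= /T.
    by rewrite (iotaDl 2 0 m) -map_comp; congr (_ :: _ :: _); apply: eq_map => k /=; rewrite addnC.
  by rewrite perm_sym perm_map_perm.
have P3 := perm_rem_cons _ _ _ _ P2.
have P4 := perm_rem_cons _ _ _ _ P3.
rewrite E1 perm_catC /=. rewrite !perm_cons perm_sym. exact: P4.
Qed.

Theorem mainTheorem3 (n : nat) (hn : (2 <= n)%N) (X : tfield n)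
    (Xsmooth : forall a, smooth (X a))
    (Xsym : totally_symmetric X)
    (Xaff : affine X) :
  forall (r t : 'I_4) (a : 'I_n -> 'I_4) (p : pt),
    pd r (pd t (X a)) p =
      INR n * (INR n - 1) / 2 *
      (/ INR n`! *
        sum_perm (fun s : 'S_n =>
          pd (getidx (fun i => a (s i)) 0) (pd (getidx (fun i => a (s i)) 1)
            (X (tailidx a s r t))) p)).
Proof.
case: n hn X Xsmooth Xsym Xaff => [|[|m]] // _ X Xsmooth Xsym Xaff r t a p.
set A := map a (enum 'I_m.+2).
have hA : size A = m.+2 by rewrite size_map size_enum_ord.
set W := fun i j : 'I_m.+2 => Zl _ X p (a i) (a j) (r :: t :: rem (a j) (rem (a i) A)).
have LHS : pd r (pd t (X a)) p = Zl _ X p r t A by rewrite /Zl /A mk_map.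
have Hterm : forall s : {perm 'I_m.+2},
    pd (getidx (fun i => a (s i)) 0) (pd (getidx (fun i => a (s i)) 1)
            (X (tailidx a s r t))) p = W (s (inord 0)) (s (inord 1)).
  move=> s. rewrite !getidxE //.
  rewrite -(mk_map _ (tailidx a s r t)).
  apply: (Zl_perm _ _ Xsym); first by rewrite size_map size_enum_ord.
  exact: tail_perm.
have H2 := two _ _ Xsmooth Xsym Xaff p A r t hA.
rewrite (Dconv _ a (fun x y => Zl _ X p x y (r :: t :: rem y (rem x A)))) in H2.
have H3 := double_count _ W.
rewrite /sum_perm (eq_bigr _ (fun s _ => Hterm s)) LHS.
set S := \big[Rplus/0]_(s : {perm 'I_m.+2}) W (s (inord 0)) (s (inord 1)).
set DD := \big[Rplus/0]_(i : 'I_m.+2) \big[Rplus/0]_(j | j != i) W i j.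
fold S in H3. fold DD in H3.
have H2' : 2 * Zl _ X p r t A = DD := H2.
have nf := INR_fact_neq0 m.+2.
have -> : INR m.+2 * (INR m.+2 - 1) / 2 * (/ INR (m.+2)`! * S)
        = (INR m.+2 * (INR m.+2 - 1) * S) / (2 * INR (m.+2)`!) by field.
rewrite H3 -H2'. field. done.
Qed.
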